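(* Consider the contextual auction problem and the exponential-weights algorithm with the OptSq loss estimator described in the context, with a finite predictor class $\mathcal{F}$ satisfying realizability with perfect predictor $f^*$. Then $Z_T\le\log|\mathcal{F}|$, where $Z_T=-\mathbb{E}\big[\log\mathbb{E}_{f\sim q_1}\exp\big(-\eta\sum_{t=1}^T(\hat\ell_{t,f}-\hat\ell_{t,f^*})\big)\big]$, and, with an optimal choice of $\eta\le1$, the algorithm guarantees $\mathbb{E}[\mathrm{Reg}]=O\big(\log|\mathcal{F}|+\sqrt{\sum_{t=1}^TN_t\log|\mathcal{F}|}\big)$.
   Context: Notation: $\mathrm{smax}_iv_i$ is the second-largest entry of $v$; $\arg\max$, $\arg\mathrm{smax}$ are the indices of the largest and second-largest entries, ties broken by a fixed deterministic rule. Problem: $T$ rounds. At each round $t$: the learner observes a context $x_t\in\mathcal{X}$ and $N_t$ bidders ($N=\max_tN_t$); chooses estimated CTRs $\tilde\rho_t\in[0,1]^{N_t}$; simultaneously bidders choose bids $b_{t,i}\in[0,1]$ (possibly adaptively adversarial, without knowing $\tilde\rho_t$). Winner $i_t=\arg\max_ib_{t,i}\tilde\rho_{t,i}$, runner-up $j_t=\arg\mathrm{smax}_ib_{t,i}\tilde\rho_{t,i}$, payment per click $d_t=b_{t,j_t}\tilde\rho_{t,j_t}/\tilde\rho_{t,i_t}$; ad $i_t$ is clicked with probability $\rho_{t,i_t}$ (true CTR). The learner observes $b_t$ and click indicator $c_t\in\{0,1\}$ and receives $c_td_t$. Regret: $\mathrm{Reg}=\sum_t\mathrm{smax}_{i\in[N_t]}b_{t,i}\rho_{t,i}-\sum_tc_td_t$.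 Realizability: $\mathcal{F}\ni f^*$ with $f^*(x_t,i)=\rho_{t,i}$ for all $t,i$, where $\mathcal{F}$ consists of functions $\mathcal{X}\times[N]\to[0,1]$. Algorithm: with learning rate $\eta>0$, sample $f_t\sim q_t$, $q_{t,f}\propto\exp(-\eta\sum_{s<t}\hat\ell_{s,f})$ ($q_1$ uniform on $\mathcal{F}$), set $\tilde\rho_{t,i}=f_t(x_t,i)$, run the auction, and define $\hat\ell_{t,f}=\frac{1}{4\eta}(f(x_t,i_t)-c_t)^2-\mathrm{smax}_{j\in[N_t]}b_{t,j}f(x_t,j)$ for each $f\in\mathcal{F}$. *)

(* Defs.v *)
From mathcomp Require Import all_boot all_order all_algebra.
From mathcomp Require Import reals.
From mathcomp Require Import sequences exp.
Set Implicit Arguments. Unset Strict Implicit. Unset Printing Implicit Defensive.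
Import Order.TTheory GRing.Theory Num.Theory.
Local Open Scope ring_scope.

Section Auction.
Variable R : realType.

(* index of the largest entry of v among the indices in s; ties broken
   deterministically in favour of the earliest index in s *)
Definition argmax_in (s : seq nat) (v : nat -> R) : nat :=
  match s with
  | [::] => 0%N
  | i :: s' => foldl (fun b j => if v b < v j then j else b) i s'
  end.

Definition winner (n : nat) (v : nat -> R) : nat := argmax_in (iota 0 n) v.
Definition runner (n : nat) (v : nat -> R) : nat :=
  argmax_in [seq j <- iota 0 n | j != winner n v] v.
Definition smax (n : nat) (v : nat -> R) : R := v (runner n v).

Section Game.
(* X : context space; I indexes the finite class F (injective family);
   istar indexes the perfect predictor f^*; Nt t : number of bidders at
   round t (rounds are t = 0, ..., T-1); eta : learning rate;
   advx / advb : adaptive adversary choosing the context and the bids of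
   round t as a function of the history of past (sampled predictor, click)
   pairs. *)
Variables (X : Type) (I : finType) (F : I -> X -> nat -> R) (istar : I)
  (Nt : nat -> nat) (eta : R)
  (advx : nat -> seq (I * bool) -> X)
  (advb : nat -> seq (I * bool) -> nat -> R).

Definition hist := seq (I * bool).
Definition dflt : I * bool := (istar, false).

Definition scores (t : nat) (h : hist) (g : I) : nat -> R :=
  fun j => advb t h j * F g (advx t h) j.

Definition win (t : nat) (h : hist) (f : I) : nat := winner (Nt t) (scores t h f).
Definition run (t : nat) (h : hist) (f : I) : nat := runner (Nt t) (scores t h f).

(* OptSq loss estimate hat l_{t,g}, round t, history h, (f_t, c_t) = fc *)
Definition lhat (t : nat) (h : hist) (fc : I * bool) (g : I) : R :=
  (4 * eta)^-1 * (F g (advx t h) (win t h fc.1) - (fc.2)%:R) ^+ 2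
  - smax (Nt t) (scores t h g).

Definition cumloss (h : hist) (g : I) : R :=
  \sum_(s < size h) lhat s (take s h) (nth dflt h s) g.

Definition q (h : hist) (g : I) : R :=
  expR (- eta * cumloss h g) / \sum_(g' : I) expR (- eta * cumloss h g').

Definition rho (t : nat) (h : hist) (j : nat) : R := F istar (advx t h) j.

Definition click_prob (t : nat) (h : hist) (fc : I * bool) : R :=
  let p := rho t h (win t h fc.1) in if fc.2 then p else 1 - p.

Definition traj_prob (T : nat) (h : T.-tuple (I * bool)) : R :=
  \prod_(t < T) (q (take t h) (nth dflt h t).1
                 * click_prob t (take t h) (nth dflt h t)).

Definition expect (T : nat) (Y : hist -> R) : R :=
  \sum_(h : T.-tuple (I * bool)) traj_prob h * Y h.

Definition pay (t : nat) (h : hist) (f : I) : R :=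
  advb t h (run t h f) * F f (advx t h) (run t h f)
  / F f (advx t h) (win t h f).

Definition regret (T : nat) (h : hist) : R :=
  \sum_(t < T) (smax (Nt t) (fun j => advb t (take t h) j * rho t (take t h) j)
               - ((nth dflt h t).2)%:R * pay t (take t h) (nth dflt h t).1).

Definition expected_regret (T : nat) : R := expect T (regret T).

Definition Z (T : nat) : R :=
  - expect T (fun h => ln (#|I|%:R^-1 *
      \sum_(g : I) expR (- eta * (cumloss h g - cumloss h istar)))).

End Game.
End Auction.

(* Main.v *)
Require Import Defs.
From mathcomp Require Import all_boot all_order all_algebra.
From mathcomp Require Import reals.
From mathcomp Require Import sequences exp.
From mathcomp Require Import lra ring.
Import Order.TTheory GRing.Theory Num.Theory.
Local Open Scope ring_scope.
Set Implicit Arguments. Unset Strict Implicit. Unset Printing Implicit Defensive.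

Section Argmax.
Variable R : realType.

Lemma foldl_max (v : nat -> R) (s : seq nat) (i : nat) :
  let r := foldl (fun b j => if v b < v j then j else b) i s in
  r \in i :: s /\ (forall j, j \in i :: s -> v j <= v r).
Proof.
elim: s i => [|k s IH] i /=.
  by split; [rewrite inE | move=> j; rewrite inE => /eqP ->].
have [H1 H2] := IH (if v i < v k then k else i).
split.
  move: H1; case: ifP => _; rewrite !inE => /orP [->|->]; rewrite ?orbT //.
move=> j; rewrite !inE => /orP [/eqP ->|/orP [/eqP ->|js]].
- apply: le_trans (H2 _ (mem_head _ _)); case: ifP => // /ltW //.
- apply: le_trans (H2 _ (mem_head _ _)); case: ifP => //; by rewrite ltNge => /negbFE.
- by apply: H2; rewrite inE js orbT.
Qed.

Lemma argmax_in_mem (s : seq nat) (v : nat -> R) : s != [::] -> argmax_in s v \in s.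
Proof. by case: s => // i s _; have [] := foldl_max v s i. Qed.

Lemma argmax_in_max (s : seq nat) (v : nat -> R) j : j \in s -> v j <= v (argmax_in s v).
Proof. by case: s => // i s js; have [_] := foldl_max v s i; apply. Qed.

Lemma winner_lt n (v : nat -> R) : (0 < n)%N -> (winner n v < n)%N.
Proof.
move=> n0; have := @argmax_in_mem (iota 0 n) v.
rewrite /winner mem_iota add0n; apply.
by case: n n0.
Qed.

Lemma winner_max n (v : nat -> R) j : (j < n)%N -> v j <= v (winner n v).
Proof. by move=> jn; apply: argmax_in_max; rewrite mem_iota. Qed.

Lemma runner_lt n (v : nat -> R) : (2 <= n)%N -> (runner n v < n)%N.
Proof.
move=> n2; rewrite /runner.
set s := [seq j <- iota 0 n | j != winner n v].
have : argmax_in s v \in s.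
  apply: argmax_in_mem; rewrite /s.
  case E: (winner n v == 0)%N.
  - apply/eqP => H; have : (1 \in [seq j <- iota 0 n | j != winner n v]).
      by rewrite mem_filter (eqP E) /= mem_iota.
    by rewrite H.
  - apply/eqP => H; have : (0 \in [seq j <- iota 0 n | j != winner n v]).
      by rewrite mem_filter eq_sym E /= mem_iota; move: n2; clear; case: n.
    by rewrite H.
by rewrite mem_filter mem_iota add0n => /andP [_ /andP [_ ->]].
Qed.

Lemma smax_le_win n (v : nat -> R) : (2 <= n)%N -> smax n v <= v (winner n v).
Proof. by move=> n2; apply: winner_max; apply: runner_lt. Qed.

End Argmax.

Section RealLemmas.
Variable R : realType.

Lemma expR_quad (y : R) : y <= 3^-1 -> expR y <= 1 + y + y ^+ 2.
Proof.
move=> hy; set z := y / 2.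
have yz : y = z + z by rewrite /z -splitr.
have ez : 0 < expR z := expR_gt0 z.
have h1 : 1 - z <= (expR z)^-1 by rewrite -expRN; have := expR_ge1Dx (- z).
have h2 : (1 - z) * expR z <= 1.
  by have := ler_wpM2r (ltW ez) h1; rewrite mulVf // gt_eqF.
have hz : z <= 6^-1 by rewrite /z; lra.
have hQ : 1 <= (1 - z) ^+ 2 * (1 + 2 * z + 4 * z ^+ 2).
  have : 0 <= z ^+ 2 * (1 - 6 * z + 4 * z ^+ 2).
    apply: mulr_ge0; first exact: sqr_ge0.
    have : 0 <= 1 - 6 * z by lra.
    have := sqr_ge0 z; lra.
  move=> H; apply: le_trans (_ : 1 + z ^+ 2 * (1 - 6 * z + 4 * z ^+ 2) <= _).
    lra.
  rewrite le_eqVlt; apply/orP; left; apply/eqP; rewrite !expr2; ring.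
rewrite yz expRD.
have e2 : expR z * expR z * ((1 - z) ^+ 2) <= 1.
  have h3 : 0 <= (1 - z) * expR z by apply: mulr_ge0 => //; [lra | exact: ltW].
  have := ler_pM h3 h3 h2 h2; rewrite mul1r => H.
  apply: le_trans H; rewrite le_eqVlt; apply/orP; left; apply/eqP; rewrite !expr2; ring.
have ee : 0 <= expR z * expR z by apply: mulr_ge0; apply: ltW.
have hQ0 : 0 <= 1 + 2 * z + 4 * z ^+ 2.
  have := sqr_ge0 (2 * z + 2^-1); rewrite !expr2. lra.
apply: le_trans (_ : expR z * expR z * ((1 - z) ^+ 2 * (1 + 2 * z + 4 * z ^+ 2)) <= _).
  by rewrite -{1}(mulr1 (expR z * expR z)) ler_wpM2l.
apply: le_trans (_ : 1 * (1 + 2 * z + 4 * z ^+ 2) <= _).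
  by rewrite mulrA ler_wpM2r.
rewrite mul1r le_eqVlt; apply/orP; left; apply/eqP; rewrite !expr2; ring.
Qed.

End RealLemmas.

Section RealLemmas2.
Variable R : realType.

Definition yv (a r c : R) := - (4^-1) * ((a - c) ^+ 2 - (r - c) ^+ 2).

Lemma M_bound (a r : R) : 0 <= a <= 1 -> 0 <= r <= 1 ->
  r * expR (yv a r 1) + (1 - r) * expR (yv a r 0) <= 1 - (a - r) ^+ 2 / 8.
Proof.
move=> /andP [a0 a1] /andP [r0 r1].
have b1 : yv a r 1 <= 3^-1.
  rewrite /yv; have := sqr_ge0 (r - 1); have : (a - 1) ^+ 2 <= 1.
    by rewrite expr2; nra.
  move=> *; nra.
have b0 : yv a r 0 <= 3^-1.
  rewrite /yv; have := sqr_ge0 (r - 0); have : (a - 0) ^+ 2 <= 1.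
    by rewrite subr0 expr2; nra.
  move=> *; nra.
have e1 := expR_quad b1; have e0 := expR_quad b0.
apply: le_trans (_ : r * (1 + yv a r 1 + yv a r 1 ^+ 2) + (1 - r) * (1 + yv a r 0 + yv a r 0 ^+ 2) <= _).
  apply: lerD; apply: ler_wpM2l => //; lra.
have -> : r * (1 + yv a r 1 + yv a r 1 ^+ 2) + (1 - r) * (1 + yv a r 0 + yv a r 0 ^+ 2)
   = 1 - (a - r) ^+ 2 / 4 + (a - r) ^+ 2 * ((a - r) ^+ 2 + 4 * (r * (1 - r))) / 16.
  by rewrite /yv; field.
have hd : (a - r) ^+ 2 <= 1 by rewrite expr2; nra.
have hr : 4 * (r * (1 - r)) <= 1 by have := sqr_ge0 (2 * r - 1); rewrite expr2; nra.
have := sqr_ge0 (a - r); set D := (a - r) ^+ 2 in hd * => D0.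
have : D * (D + 4 * (r * (1 - r))) <= D * 2 by apply: ler_wpM2l => //; lra.
lra.
Qed.

Lemma exp_u_bound (eta u D : R) : 0 < eta <= 3^-1 -> -1 <= u <= 1 -> 0 <= D ->
  expR (- (eta * u)) * (1 - D / 8) <= 1 - eta * u + eta ^+ 2 - D / 16.
Proof.
move=> /andP [e0 e1] /andP [u0 u1] D0.
have hu : `|eta * u| <= 3^-1.
  rewrite normrM gtr0_norm //; have : `|u| <= 1 by rewrite ler_norml; lra.
  move=> H; have := ler_wpM2l (ltW e0) H; rewrite mulr1; lra.
move: hu; rewrite ler_norml => /andP [hu1 hu2].
have E1 := expR_quad (_ : - (eta * u) <= 3^-1) .
have E2 := expR_ge1Dx (- (eta * u)).
have hsq : (- (eta * u)) ^+ 2 <= eta ^+ 2.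
  rewrite sqrrN exprMn; rewrite -{2}(mulr1 (eta ^+ 2)); apply: ler_wpM2l; first exact: sqr_ge0.
  by rewrite expr2; nra.
have E3 : expR (- (eta * u)) <= 1 - eta * u + eta ^+ 2.
  apply: le_trans (E1 _) _; [lra | lra].
set e := expR (- (eta * u)) in E2 E3 *.
have := ler_wpM2r D0 E2.
have : 0 <= (3^-1 - eta * u) * D by apply: mulr_ge0 => //; lra.
lra.
Qed.

Lemma amgm (d p k : R) : 0 < p -> 0 < k -> `|d| <= k * p * d ^+ 2 + (4 * k * p)^-1.
Proof.
move=> p0 k0; have kp : 0 < k * p by apply: mulr_gt0.
have : 0 <= (2 * (k * p) * `|d| - 1) ^+ 2 by apply: sqr_ge0.
rewrite -(real_normK (num_real d)) => H.
have H' : 0 <= (k * p * `|d| ^+ 2 + (4 * k * p)^-1 - `|d|) * (4 * (k * p)).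
  apply: le_trans H _; rewrite le_eqVlt; apply/orP; left; apply/eqP.
  by field; rewrite !gt_eqF.
move: H'; rewrite pmulr_lge0 ?mulr_gt0 //; lra.
Qed.

Lemma pay_ineq (s a r beta : R) : 0 <= s -> s <= beta * a -> beta <= 1 -> 0 <= a ->
  s - r * (s / a) <= `|a - r|.
Proof.
move=> s0 sa b1 a0.
have [ae|anz] := eqVneq a 0.
  rewrite ae mulr0 in sa; rewrite ae.
  have -> : s = 0 by apply/eqP; rewrite eq_le s0 andbT.
  by rewrite mul0r mulr0 subr0 normr_ge0.
have apos : 0 < a by rewrite lt_def anz a0.
set k := s / a.
have k0 : 0 <= k by apply: divr_ge0.
have k1 : k <= 1.
  rewrite /k ler_pdivrMr // mul1r; apply: le_trans sa _.
  by rewrite -{2}(mul1r a) ler_wpM2r.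
have -> : s = k * a by rewrite /k divfK.
have -> : k * a - r * k = k * (a - r) by ring.
apply: le_trans (_ : k * `|a - r| <= _).
  by apply: ler_wpM2l => //; apply: ler_norm.
by rewrite -{2}(mul1r `|a - r|) ler_wpM2r.
Qed.

End RealLemmas2.

Section Core.
Variables (R : realType) (I : finType) (q : I -> R) (N : nat) (w : I -> nat)
  (A : I -> nat -> R) (r : nat -> R) (u : I -> R) (eta : R).
Hypotheses (hq : forall g, 0 < q g) (sq : \sum_g q g = 1) (hw : forall g, (w g < N)%N)
  (hA : forall g j, 0 <= A g j <= 1) (hr : forall j, 0 <= r j <= 1)
  (hu : forall g, -1 <= u g <= 1) (he : 0 < eta <= 3^-1).

Definition Mg g j := r j * expR (yv (A g j) (r j) 1) + (1 - r j) * expR (yv (A g j) (r j) 0).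
Definition dg g j := A g j - r j.
Definition Dg g := \sum_f q f * dg g (w f) ^+ 2.
Definition pg g := \sum_f q f * (w f == w g)%:R.

Lemma Dg_ge0 g : 0 <= Dg g.
Proof. by apply: sumr_ge0 => f _; apply: mulr_ge0; [exact: ltW | exact: sqr_ge0]. Qed.

Lemma step1 :
  \sum_f q f * (\sum_g q g * expR (- (eta * u g)) * Mg g (w f))
  <= \sum_g q g * (1 - eta * u g + eta ^+ 2 - Dg g / 16).
Proof.
rewrite (_ : \sum_f _ = \sum_g q g * expR (- (eta * u g)) * \sum_f q f * Mg g (w f)); last first.
  under eq_bigr => f _ do rewrite mulr_sumr.
  rewrite exchange_big /=; apply: eq_bigr => g _; rewrite mulr_sumr.
  by apply: eq_bigr => f _; rewrite mulrCA !mulrA.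
apply: ler_sum => g _; rewrite -mulrA; apply: ler_wpM2l; first exact: ltW.
apply: le_trans (_ : expR (- (eta * u g)) * (1 - Dg g / 8) <= _); last first.
  by apply: exp_u_bound => //; exact: Dg_ge0.
apply: ler_wpM2l; first exact: expR_ge0.
apply: le_trans (_ : \sum_f q f * (1 - dg g (w f) ^+ 2 / 8) <= _).
  apply: ler_sum => f _; apply: ler_wpM2l; first exact: ltW.
  exact: M_bound.
rewrite /Dg; under eq_bigr => f _ do rewrite mulrBr mulr1.
by rewrite sumrB sq mulr_suml; under [X in _ - X <= _]eq_bigr => f _ do rewrite mulrA.
Qed.

Lemma pg_ge g : q g <= pg g.
Proof.
rewrite /pg (bigD1 g) //= eqxx mulr1 lerDl; apply: sumr_ge0 => f _.
by apply: mulr_ge0; [exact: ltW | exact: ler0n].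
Qed.

Lemma Dg_ge g : pg g * dg g (w g) ^+ 2 <= Dg g.
Proof.
rewrite /pg /Dg mulr_suml; apply: ler_sum => f _.
have [->|_] := eqVneq (w f) (w g); first by rewrite mulr1.
by rewrite mulr0 mul0r; apply: mulr_ge0; [exact: ltW | exact: sqr_ge0].
Qed.

Lemma sum_q_pg : \sum_g q g / pg g <= N%:R.
Proof.
pose p' (j : nat) := \sum_f q f * (w f == j)%:R.
have E g : q g / pg g = \sum_(j < N) (w g == j)%:R * (q g / p' j).
  rewrite (bigD1 (Ordinal (hw g))) //= eqxx mul1r big1 ?addr0 //.
  move=> j /eqP hj; have -> : (w g == j) = false.
    by apply/negbTE/eqP => hwj; apply: hj; apply: val_inj.
  by rewrite mul0r.
under eq_bigr => g _ do rewrite E.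
rewrite exchange_big /=.
apply: le_trans (_ : \sum_(j < N) (1 : R) <= _); last by rewrite sumr_const card_ord.
apply: ler_sum => j _.
rewrite (_ : \sum_g _ = p' j / p' j).
  have [->|nz] := eqVneq (p' j) 0; first by rewrite mul0r.
  by rewrite divff.
rewrite /p' mulr_suml; apply: eq_bigr => g _; ring.
Qed.

Lemma step3 : \sum_g q g * `|dg g (w g)| <= (16 * eta)^-1 * \sum_g q g * Dg g + 4 * eta * N%:R.
Proof.
have e0 : 0 < eta by case/andP: he.
set k := (16 * eta)^-1.
have k0 : 0 < k by rewrite invr_gt0 mulr_gt0.
apply: le_trans (_ : \sum_g (k * (q g * Dg g) + 4 * eta * (q g / pg g)) <= _).
  apply: ler_sum => g _.
  have pg0 : 0 < pg g := lt_le_trans (hq g) (pg_ge g).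
  have H := amgm (dg g (w g)) pg0 k0.
  have := ler_wpM2l (ltW (hq g)) H.
  move=> H1; apply: le_trans H1 _.
  rewrite mulrDr; apply: lerD.
    rewrite (_ : q g * (k * pg g * dg g (w g) ^+ 2) = k * (q g * (pg g * dg g (w g) ^+ 2))); last by ring.
    apply: ler_wpM2l; first exact: ltW.
    apply: ler_wpM2l; first exact: ltW (hq g).
    exact: Dg_ge.
  rewrite le_eqVlt; apply/orP; left; apply/eqP.
  rewrite /k; field.
  by rewrite !gt_eqF.
rewrite big_split /= -mulr_sumr -mulr_sumr lerD2l.
by apply: ler_wpM2l; [rewrite mulr_ge0 // ltW | exact: sum_q_pg].
Qed.

Lemma core (hN : (1 <= N)%N) :
  \sum_g q g * (u g + `|dg g (w g)|)
  - eta^-1 * (1 - \sum_f q f * (\sum_g q g * expR (- (eta * u g)) * Mg g (w f)))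
  <= 5 * eta * N%:R.
Proof.
have e0 : 0 < eta by case/andP: he.
have S1 := step1; have S3 := step3.
set L := \sum_f _ in S1 *.
have HP : eta * (\sum_g q g * u g) - eta ^+ 2 + (\sum_g q g * Dg g) / 16 <= 1 - L.
  apply: le_trans (_ : 1 - \sum_g q g * (1 - eta * u g + eta ^+ 2 - Dg g / 16) <= _);
    last by rewrite lerD2l lerN2.
  rewrite le_eqVlt; apply/orP; left; apply/eqP.
  rewrite [X in _ = 1 - X](eq_bigr (fun g => (q g - (eta * (q g * u g) - eta ^+ 2 * q g)) - (q g * Dg g) * 16^-1)); last first.
    by move=> g _; ring.
  rewrite !sumrB sq -!mulr_sumr -mulr_suml sq.
  ring.
have HP2 : eta^-1 * (eta * (\sum_g q g * u g) - eta ^+ 2 + (\sum_g q g * Dg g) / 16) <= eta^-1 * (1 - L).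
  by apply: ler_wpM2l => //; rewrite invr_ge0 ltW.
rewrite (eq_bigr (fun g => q g * u g + q g * `|dg g (w g)|)); last by move=> g _; rewrite mulrDr.
rewrite big_split /=.
set Su := \sum_g q g * u g in HP2 *.
set Sd := \sum_g q g * `|dg g (w g)| in S3 *.
set SD := \sum_g q g * Dg g in HP2 S3 *.
have NN : 1 <= (N%:R : R) by rewrite ler1n.
have E : eta^-1 * (eta * Su - eta ^+ 2 + SD / 16) = Su - eta + (16 * eta)^-1 * SD.
  by field; rewrite gt_eqF.
rewrite E in HP2.
have : eta <= eta * N%:R by rewrite -{1}(mulr1 eta) ler_wpM2l // ltW.
lra.
Qed.

End Core.

Section Game.
Variables (R : realType) (X : Type) (I : finType) (F : I -> X -> nat -> R)
  (istar : I) (Nt : nat -> nat) (eta : R)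
  (advx : nat -> seq (I * bool) -> X)
  (advb : nat -> seq (I * bool) -> nat -> R).
Hypothesis hF : forall i x j, 0 <= F i x j <= 1.

Local Notation qq := (q F istar Nt eta advx advb).
Local Notation cp := (click_prob F istar Nt advx advb).
Local Notation tp := (traj_prob F istar Nt eta advx advb).
Local Notation EE := (expect F istar Nt eta advx advb).
Local Notation dd := (dflt istar).

Lemma sum_exp_gt0 (f : I -> R) : 0 < \sum_g expR (f g).
Proof.
rewrite (bigD1 istar) //=; apply: ltr_wpDr (expR_gt0 _).
by apply: sumr_ge0 => *; exact: expR_ge0.
Qed.

Lemma q_gt0 h g : 0 < qq h g.
Proof. by rewrite /q divr_gt0 // ?expR_gt0 // sum_exp_gt0. Qed.

Lemma sum_q h : \sum_g qq h g = 1.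
Proof. by rewrite /q -mulr_suml mulfV // gt_eqF // sum_exp_gt0. Qed.

Lemma cp_true t h f : cp t h (f, true) = rho F istar advx t h (win F Nt advx advb t h f).
Proof. by []. Qed.
Lemma cp_false t h f : cp t h (f, false) = 1 - rho F istar advx t h (win F Nt advx advb t h f).
Proof. by []. Qed.

Lemma cp_ge0 t h fc : 0 <= cp t h fc.
Proof.
case: fc => f [] /=; rewrite /click_prob /rho /=;
  have /andP [H1 H2] := hF istar (advx t h) (win F Nt advx advb t h f); lra.
Qed.

Definition E1 t h (G : I * bool -> R) :=
  \sum_(fc : I * bool) qq h fc.1 * cp t h fc * G fc.

Lemma E1E t h G : E1 t h G =
  \sum_f qq h f * (cp t h (f, true) * G (f, true) + cp t h (f, false) * G (f, false)).
Proof.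
rewrite /E1 (_ : \sum_(fc : I * bool) _ = \sum_(f : I) \sum_(c : bool) qq h (f, c).1 * cp t h (f, c) * G (f, c)); last first.
  by rewrite pair_bigA; apply: eq_bigr; case.
apply: eq_bigr => f _; rewrite big_bool.
change (qq h f * cp t h (f,true) * G (f,true) + qq h f * cp t h (f,false) * G (f,false) =
  qq h f * (cp t h (f, true) * G (f, true) + cp t h (f, false) * G (f, false))).
by rewrite [RHS]mulrDr !mulrA.
Qed.

Lemma E1_const t h c : E1 t h (fun _ => c) = c.
Proof.
rewrite E1E; under eq_bigr => f _ do rewrite -mulrDl cp_true cp_false subrKC mul1r.
by rewrite -mulr_suml sum_q mul1r.
Qed.

Lemma E1_le t h G1 G2 : (forall fc, G1 fc <= G2 fc) -> E1 t h G1 <= E1 t h G2.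
Proof.
move=> H; apply: ler_sum => fc _; apply: ler_wpM2l => //.
by apply: mulr_ge0; [apply: ltW; apply: q_gt0 | apply: cp_ge0].
Qed.

Lemma E1_ext t h G1 G2 : (forall fc, G1 fc = G2 fc) -> E1 t h G1 = E1 t h G2.
Proof. by move=> H; apply: eq_bigr => fc _; rewrite H. Qed.

Lemma E1D t h G1 G2 : E1 t h (fun fc => G1 fc + G2 fc) = E1 t h G1 + E1 t h G2.
Proof. by rewrite /E1 -big_split; apply: eq_bigr => fc _; rewrite mulrDr. Qed.

Lemma E1Z t h c G : E1 t h (fun fc => c * G fc) = c * E1 t h G.
Proof. by rewrite /E1 mulr_sumr; apply: eq_bigr => fc _; rewrite mulrCA. Qed.

Lemma tp_ge0 T (h : T.-tuple (I * bool)) : 0 <= tp h.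
Proof.
rewrite /traj_prob; apply: prodr_ge0 => t _; apply: mulr_ge0.
  by apply: ltW; apply: q_gt0.
by apply: cp_ge0.
Qed.

Lemma expect0 Y : EE 0 Y = Y [::].
Proof.
rewrite /expect (big_pred1 [tuple]); last by move=> x /=; apply/esym/eqP; exact: tuple0.
by rewrite /traj_prob big_ord0 mul1r.
Qed.

Lemma take_rcons_le (A : Type) (s : seq A) x n : (n <= size s)%N -> take n (rcons s x) = take n s.
Proof. by move=> H; rewrite -cats1 takel_cat. Qed.

Lemma tp_rcons T (h : T.-tuple (I * bool)) fc :
  tp [tuple of rcons h fc] = tp h * (qq h fc.1 * cp T h fc).
Proof.
rewrite /traj_prob big_ord_recr /=; congr (_ * _).
  apply: eq_bigr => i _.
  rewrite take_rcons_le ?size_tuple ?(ltnW (ltn_ord i)) // nth_rcons size_tuple ltn_ord //.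
rewrite take_rcons_le ?size_tuple // nth_rcons size_tuple ltnn eqxx.
have -> : take T h = h by rewrite -{1}(size_tuple h) take_size.
by [].
Qed.

Lemma expect_rcons T Y :
  EE T.+1 Y = EE T (fun h => E1 T h (fun fc => Y (rcons h fc))).
Proof.
rewrite /expect /E1.
pose f := fun p : T.-tuple (I * bool) * (I * bool) => [tuple of rcons p.1 p.2].
pose g := fun h : T.+1.-tuple (I * bool) =>
  ([tuple of belast (thead h) (behead h)], last (thead h) (behead h)).
have fK : cancel f g.
  case=> t x; rewrite /f /g /=.
  have E : (rcons t x) = (thead [tuple of rcons t x]) :: (behead [tuple of rcons t x]).
    by have := congr1 val (tuple_eta [tuple of rcons t x]).
  have L := lastI (thead [tuple of rcons t x]) (behead [tuple of rcons t x]).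
  rewrite -E in L.
  have Hx : x = last (thead [tuple of rcons t x]) (behead [tuple of rcons t x]).
    by have := congr1 (last x) L; rewrite !last_rcons.
  rewrite -Hx in L; have Ht := rcons_injl x L.
  by congr pair => //; apply: val_inj; exact: (esym Ht).
have gK : cancel g f.
  move=> h; rewrite /f /g /=; apply: val_inj => /=.
  by rewrite -lastI; have := congr1 val (tuple_eta h).
rewrite (reindex f); last by apply: onW_bij; exists g.
rewrite (_ : \sum_(p : T.-tuple (I * bool) * (I * bool)) _ = \sum_(a : T.-tuple (I * bool)) \sum_(b : I * bool) tp (f (a, b)) * Y (f (a, b))); last first.
  by rewrite pair_bigA; apply: eq_bigr; case.
apply: eq_bigr => h _; rewrite mulr_sumr; apply: eq_bigr => fc _.
by rewrite /f tp_rcons !mulrA.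
Qed.

Lemma expect_le T (Y1 Y2 : hist I -> R) : (forall h : T.-tuple (I * bool), Y1 h <= Y2 h) ->
  EE T Y1 <= EE T Y2.
Proof. by move=> H; apply: ler_sum => h _; apply: ler_wpM2l; [apply: tp_ge0|]. Qed.

Lemma expectD T (Y1 Y2 : hist I -> R) : EE T (fun h => Y1 h + Y2 h) = EE T Y1 + EE T Y2.
Proof. by rewrite /expect -big_split; apply: eq_bigr => h _; rewrite mulrDr. Qed.

Lemma expectZ T c (Y : hist I -> R) : EE T (fun h => c * Y h) = c * EE T Y.
Proof. by rewrite /expect mulr_sumr; apply: eq_bigr => h _; rewrite mulrCA. Qed.

Lemma expect_ext T (Y1 Y2 : hist I -> R) : (forall h : T.-tuple (I * bool), Y1 h = Y2 h) -> EE T Y1 = EE T Y2.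
Proof. by move=> H; apply: eq_bigr => h _; rewrite H. Qed.

Lemma expect_const T c : EE T (fun _ => c) = c.
Proof.
elim: T c => [|T IH] c; first by rewrite expect0.
by rewrite expect_rcons (@expect_ext _ _ (fun _ => c)) // => h; rewrite E1_const.
Qed.

Lemma expect_sum_le T (G : nat -> seq (I * bool) -> I * bool -> R) (B : nat -> R) :
  (forall t h, (t < T)%N -> E1 t h (G t h) <= B t) ->
  EE T (fun h => \sum_(t < T) G t (take t h) (nth dd h t)) <= \sum_(t < T) B t.
Proof.
elim: T => [|T IH] H; first by rewrite expect0 !big_ord0.
rewrite expect_rcons big_ord_recr /=.
apply: le_trans (_ : EE T (fun h => \sum_(t < T) G t (take t h) (nth dd h t) + B T) <= _).
  apply: expect_le => h.
  rewrite (@E1_ext _ _ _ (fun fc => \sum_(t < T) G t (take t h) (nth dd h t) + G T h fc)).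
    by rewrite E1D E1_const lerD2l; exact: H.
  move=> fc; rewrite big_ord_recr /=.
  have -> : take T (rcons h fc) = h.
    by rewrite take_rcons_le ?size_tuple // -{1}(size_tuple h) take_size.
  rewrite nth_rcons size_tuple ltnn eqxx; congr (_ + _).
  apply: eq_bigr => i _.
  by rewrite take_rcons_le ?size_tuple ?(ltnW (ltn_ord i)) // nth_rcons size_tuple ltn_ord.
rewrite expectD expect_const lerD2r; apply: IH => t h tT; apply: H.
exact: ltnW.
Qed.



Local Notation lh := (lhat F Nt eta advx advb).
Local Notation sc := (scores F advx advb).
Local Notation wn := (win F Nt advx advb).

Definition reg t h (fc : I * bool) :=
  smax (Nt t) (fun j => advb t h j * rho F istar advx t h j)
  - (fc.2)%:R * pay F Nt advx advb t h fc.1.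

Definition Yv t h fc := \sum_g qq h g * expR (- eta * (lh t h fc g - lh t h fc istar)).
Definition Pt t h fc := - ln (Yv t h fc).

Section Round.
Variables (t : nat) (h : hist I).
Hypotheses (hN : (2 <= Nt t)%N) (hb : forall j, (j < Nt t)%N -> 0 <= advb t h j <= 1)
  (he : 0 < eta <= 3^-1).

Let N := Nt t.
Let x := advx t h.
Let s g := smax N (sc t h g).
Let uu g := s istar - s g.
Let AA g j := F g x j.
Let rr j := F istar x j.

Lemma s_bounds g : 0 <= s g <= 1.
Proof.
rewrite /s /smax /scores; have lt := runner_lt (sc t h g) hN.
have /andP [b0 b1] := hb lt; have /andP [f0 f1] := hF g x (runner N (sc t h g)).
rewrite /x; apply/andP; split; first exact: mulr_ge0.
by rewrite -(mulr1 1); apply: ler_pM.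
Qed.

Lemma w_lt g : (wn t h g < N)%N.
Proof. by apply: winner_lt; apply: leq_trans hN. Qed.

Lemma reg_bound : E1 t h (reg t h) <= \sum_g qq h g * (uu g + `|dg AA rr g (wn t h g)|).
Proof.
rewrite E1E; apply: ler_sum => f _; apply: ler_wpM2l; first exact: ltW (q_gt0 _ _).
rewrite cp_true cp_false /reg /=.
change (rr (wn t h f) * (s istar - 1 * (s f / AA f (wn t h f)))
  + (1 - rr (wn t h f)) * (s istar - 0 * (s f / AA f (wn t h f)))
  <= (s istar - s f) + `|AA f (wn t h f) - rr (wn t h f)|).
have /andP [s0 _] := s_bounds f.
have /andP [b0 b1] := hb (w_lt f).
have /andP [a0 _] := hF f x (wn t h f).
have sa : s f <= advb t h (wn t h f) * AA f (wn t h f).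
  exact: (smax_le_win (sc t h f) hN).
have := @pay_ineq R (s f) (AA f (wn t h f)) (rr (wn t h f)) (advb t h (wn t h f)) s0 sa b1 a0.
rewrite mul1r mul0r subr0.
set P := s f / _.
lra.
Qed.

Lemma lh_diff f c g :
  - eta * (lh t h (f, c) g - lh t h (f, c) istar)
  = - (eta * uu g) + yv (AA g (wn t h f)) (rr (wn t h f)) (c%:R).
Proof.
have e0 : eta != 0 by case/andP: he => e0 _; rewrite gt_eqF.
rewrite /lhat /uu /s /yv /AA /rr /x /=.
by field.
Qed.

Lemma Yv_E f c : Yv t h (f, c) =
  \sum_g qq h g * expR (- (eta * uu g)) * expR (yv (AA g (wn t h f)) (rr (wn t h f)) (c%:R)).
Proof.
by apply: eq_bigr => g _; rewrite lh_diff expRD mulrA.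
Qed.

Lemma Yv_gt0 fc : 0 < Yv t h fc.
Proof.
rewrite /Yv (bigD1 istar) //=; apply: ltr_wpDr.
  by apply: sumr_ge0 => g _; apply: mulr_ge0; [exact: ltW (q_gt0 _ _) | exact: expR_ge0].
by apply: mulr_gt0; [exact: q_gt0 | exact: expR_gt0].
Qed.

Lemma E1_Yv : E1 t h (Yv t h) =
  \sum_f qq h f * (\sum_g qq h g * expR (- (eta * uu g)) * Mg AA rr g (wn t h f)).
Proof.
rewrite E1E; apply: eq_bigr => f _; congr (_ * _).
rewrite !Yv_E cp_true cp_false !mulr_sumr -big_split /=.
apply: eq_bigr => g _.
rewrite /Mg /rr /AA /x /rho.
have -> : ((true : nat)%:R : R) = 1 by [].
have -> : ((false : nat)%:R : R) = 0 by [].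
ring.
Qed.

Lemma P_bound : 1 - \sum_f qq h f * (\sum_g qq h g * expR (- (eta * uu g)) * Mg AA rr g (wn t h f))
  <= E1 t h (Pt t h).
Proof.
apply: le_trans (_ : E1 t h (fun fc => 1 + (-1) * Yv t h fc) <= _); last first.
  apply: E1_le => fc; rewrite /Pt.
  have Y0 := Yv_gt0 fc.
  have H := @le_ln1Dx R (Yv t h fc - 1).
  rewrite (_ : 1 + (Yv t h fc - 1) = Yv t h fc) in H; last by ring.
  have H1 : -1 < Yv t h fc - 1 by lra.
  have := H H1; lra.
by rewrite E1D E1_const E1Z E1_Yv mulN1r.
Qed.

Lemma round_bound :
  E1 t h (fun fc => reg t h fc + (- eta^-1) * Pt t h fc) <= 5 * eta * (Nt t)%:R.
Proof.
rewrite E1D E1Z.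
have R1 := reg_bound; have P1 := P_bound.
have e0 : 0 < eta by case/andP: he.
have C := @core R I (qq h) N (wn t h) AA rr uu eta (q_gt0 h) (sum_q h) w_lt
  (fun g j => hF g x j) (fun j => hF istar x j)
  (fun g => ltac:(have := s_bounds g; have := s_bounds istar; rewrite /uu; lra)) he
  (ltnW hN).
have ei : 0 <= eta^-1 by rewrite invr_ge0 ltW.
have P2 := ler_wpM2l ei P1.
set L := \sum_f _ in P1 P2 C.
set S := \sum_g _ in R1 C.
rewrite /N in C.
lra.
Qed.

End Round.


Local Notation cl := (cumloss F istar Nt eta advx advb).

Definition Aw h := \sum_g expR (- eta * (cl h g - cl h istar)).

Lemma cl_rcons h fc g : cl (rcons h fc) g = cl h g + lh (size h) h fc g.
Proof.
rewrite /cumloss size_rcons big_ord_recr /=; congr (_ + _).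
  apply: eq_bigr => i _.
  by rewrite take_rcons_le ?(ltnW (ltn_ord i)) // nth_rcons ltn_ord.
by rewrite take_rcons_le // take_size nth_rcons ltnn eqxx.
Qed.

Lemma Aw_gt0 h : 0 < Aw h.
Proof. exact: sum_exp_gt0. Qed.

Lemma Aw_q h g : Aw h * qq h g = expR (- eta * (cl h g - cl h istar)).
Proof.
rewrite /Aw /q.
set S := \sum_g' expR (- eta * cl h g').
have S0 : S != 0 by rewrite gt_eqF // sum_exp_gt0.
have -> : \sum_g0 expR (- eta * (cl h g0 - cl h istar)) = S * expR (eta * cl h istar).
  rewrite /S mulr_suml; apply: eq_bigr => g0 _; rewrite -expRD; congr expR; ring.
rewrite mulrC -!mulrA [X in _ * X]mulrA mulVf // mul1r -expRD; congr expR; ring.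
Qed.

Lemma Aw_rcons h fc : Aw (rcons h fc) = Aw h * Yv (size h) h fc.
Proof.
rewrite /Yv mulr_sumr /Aw; apply: eq_bigr => g _.
rewrite mulrA Aw_q -expRD !cl_rcons; congr expR; ring.
Qed.

Lemma card_I_gt0 : (0 < #|I|)%N.
Proof. by apply/card_gt0P; exists istar. Qed.

Lemma Pot_sum h : - ln (#|I|%:R^-1 * Aw h) = \sum_(t < size h) Pt t (take t h) (nth dd h t).
Proof.
elim/last_ind: h => [|h fc IH].
  rewrite big_ord0 /Aw.
  have -> : \sum_g expR (- eta * (cl [::] g - cl [::] istar)) = \sum_(g : I) (1 : R).
    by apply: eq_bigr => g _; rewrite /cumloss !big_ord0 subrr mulr0 expR0.
  rewrite sumr_const (_ : #|(xpredT : pred I)| = #|I|)%N; last by apply: eq_card.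
  rewrite mulVf ?ln1 ?oppr0 //.
  by rewrite pnatr_eq0 -lt0n card_I_gt0.
rewrite Aw_rcons size_rcons big_ord_recr /= mulrA.
have c0 : 0 < (#|I|%:R^-1 : R) by rewrite invr_gt0 ltr0n card_I_gt0.
rewrite lnM ?posrE ?mulr_gt0 ?Aw_gt0 ?Yv_gt0 //.
rewrite opprD IH; congr (_ + _).
  apply: eq_bigr => i _.
  by rewrite take_rcons_le ?(ltnW (ltn_ord i)) // nth_rcons ltn_ord.
by rewrite take_rcons_le // take_size nth_rcons ltnn eqxx.
Qed.

End Game.

Lemma Z_le (R : realType) (X : Type) (I : finType) (F : I -> X -> nat -> R) (istar : I)
  (Nt : nat -> nat) (T : nat) (eta : R)
  (advx : nat -> seq (I * bool) -> X) (advb : nat -> seq (I * bool) -> nat -> R) :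
  (forall i x j, 0 <= F i x j <= 1) ->
  Z F istar Nt eta advx advb T <= ln (#|I|%:R).
Proof.
move=> hF.
have cI : (0 < #|I|)%N by apply/card_gt0P; exists istar.
have c0 : 0 < (#|I|%:R : R) by rewrite ltr0n.
have ci : 0 < (#|I|%:R^-1 : R) by rewrite invr_gt0.
rewrite /Z lerNl.
rewrite -(expect_const F istar Nt eta advx advb T (- ln (#|I|%:R))).
apply: (expect_le istar Nt eta advx advb hF) => h.
set A := \sum_g _.
have A1 : 1 <= A.
  rewrite /A (bigD1 istar) //= subrr mulr0 expR0 lerDl.
  by apply: sumr_ge0 => g _; exact: expR_ge0.
rewrite -lnV ?posrE //.
rewrite ler_ln ?posrE //; last by apply: mulr_gt0 => //; lra.
by rewrite -{1}(mulr1 (#|I|%:R^-1)) ler_wpM2l // ltW.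
Qed.


Lemma main_bound (R : realType) (X : Type) (I : finType) (F : I -> X -> nat -> R) (istar : I)
  (Nt : nat -> nat) (T : nat) (eta : R)
  (advx : nat -> seq (I * bool) -> X) (advb : nat -> seq (I * bool) -> nat -> R) :
  (forall i x j, 0 <= F i x j <= 1) ->
  (forall t, (t < T)%N -> (2 <= Nt t)%N) ->
  (forall t h j, (j < Nt t)%N -> 0 <= advb t h j <= 1) ->
  0 < eta <= 3^-1 ->
  expected_regret F istar Nt eta advx advb T
    <= eta^-1 * ln (#|I|%:R) + 5 * eta * \sum_(t < T) (Nt t)%:R.
Proof.
move=> hF hN hb he.
have e0 : 0 < eta by case/andP: he.
pose G := fun t h fc => reg F istar Nt advx advb t h fc + (- eta^-1) * Pt F istar Nt eta advx advb t h fc.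
have K : expect F istar Nt eta advx advb T (fun h => \sum_(t < T) G t (take t h) (nth (dflt istar) h t))
   <= \sum_(t < T) 5 * eta * (Nt t)%:R.
  apply: (@expect_sum_le R X I F istar Nt eta advx advb hF T G (fun t => 5 * eta * (Nt t)%:R)).
  move=> t h tT.
  exact: (round_bound istar advx hF (hN t tT) (hb t h) he).
have E1 : expect F istar Nt eta advx advb T (fun h => \sum_(t < T) G t (take t h) (nth (dflt istar) h t))
  = expected_regret F istar Nt eta advx advb T + (- eta^-1) * Z F istar Nt eta advx advb T.
  rewrite /expected_regret /Z.
  rewrite (expect_ext F istar Nt eta advx advb (Y2 := fun h => regret F istar Nt advx advb T h + (- eta^-1) *
            (- ln (#|I|%:R^-1 * Aw F istar Nt eta advx advb h)))); last first.
    move=> h; rewrite /G big_split /= -mulr_sumr Pot_sum size_tuple.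
    by [].
  rewrite expectD expectZ; congr (_ + _ * _).
  rewrite -mulN1r -expectZ; apply: expect_ext => h.
  by rewrite mulN1r.
rewrite E1 -mulr_sumr in K.
have Zl := Z_le istar Nt T eta advx advb hF.
have ei : 0 <= eta^-1 by rewrite invr_ge0 ltW.
have := ler_wpM2l ei Zl.
set Zv := Z _ _ _ _ _ _ _ in K *.
set Er := expected_regret _ _ _ _ _ _ _ in K *.
move: K; rewrite mulNr => K.
lra.
Qed.


Lemma single_bound (R : realType) (X : Type) (I : finType) (F : I -> X -> nat -> R) (istar : I)
  (Nt : nat -> nat) (T : nat) (eta : R)
  (advx : nat -> seq (I * bool) -> X) (advb : nat -> seq (I * bool) -> nat -> R) :
  (#|I| <= 1)%N ->
  (forall i x j, 0 <= F i x j <= 1) ->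
  (forall t, (t < T)%N -> (2 <= Nt t)%N) ->
  (forall t h j, (j < Nt t)%N -> 0 <= advb t h j <= 1) ->
  expected_regret F istar Nt eta advx advb T <= 0.
Proof.
move=> /fintype_le1P gi hF hN hb.
have H : forall t h, (t < T)%N ->
    E1 F istar Nt eta advx advb t h (reg F istar Nt advx advb t h) <= 0.
  move=> t h tT.
  apply: le_trans (reg_bound istar eta advx hF (hN t tT) (hb t h)) _.
  rewrite big1 // => g _; rewrite (gi istar g) /=.
  by rewrite subrr /dg subrr normr0 addr0 mulr0.
have K := @expect_sum_le R X I F istar Nt eta advx advb hF T
  (fun t h fc => reg F istar Nt advx advb t h fc) (fun _ => 0) H.
rewrite big1 // in K.
Qed.


Theorem corollary2 (R : realType) :
  (forall (X : Type) (I : finType) (F : I -> X -> nat -> R) (istar : I)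
     (Nt : nat -> nat) (T : nat) (eta : R)
     (advx : nat -> seq (I * bool) -> X)
     (advb : nat -> seq (I * bool) -> nat -> R),
     injective F ->
     (forall i x j, 0 <= F i x j <= 1) ->
     (forall t, (t < T)%N -> (2 <= Nt t)%N) ->
     (forall t h j, (j < Nt t)%N -> 0 <= advb t h j <= 1) ->
     0 < eta ->
     Z F istar Nt eta advx advb T <= ln (#|I|%:R))
  /\
  exists C : R, 0 < C /\
    forall (I : finType) (T : nat) (Nt : nat -> nat),
      (forall t, (t < T)%N -> (2 <= Nt t)%N) ->
      exists eta : R, 0 < eta <= 1 /\
        forall (X : Type) (F : I -> X -> nat -> R) (istar : I)
          (advx : nat -> seq (I * bool) -> X)
          (advb : nat -> seq (I * bool) -> nat -> R),
          injective F ->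
          (forall i x j, 0 <= F i x j <= 1) ->
          (forall t h j, (j < Nt t)%N -> 0 <= advb t h j <= 1) ->
          expected_regret F istar Nt eta advx advb T
            <= C * (ln (#|I|%:R)
                    + Num.sqrt ((\sum_(t < T) (Nt t)%:R) * ln (#|I|%:R))).
Proof.
split.
  move=> X I F istar Nt T eta advx advb _ hF _ _ _.
  exact: Z_le.
exists 18; split; first lra.
move=> I T Nt hN.
set L := ln (#|I|%:R : R).
set S := \sum_(t < T) ((Nt t)%:R : R).
have S0 : 0 <= S by apply: sumr_ge0 => t _; exact: ler0n.
have sq0 : 0 <= Num.sqrt (S * L) by exact: sqrtr_ge0.
have [hI|hI] := leqP #|I| 1.
  exists 3^-1; split; first lra.
  move=> X F istar advx advb _ hF hb.
  apply: le_trans (single_bound istar 3^-1 advx hI hF hN hb) _.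
  have L0 : 0 <= L.
    apply: ln_ge0; rewrite ler1n; apply/card_gt0P; by exists istar.
  apply: mulr_ge0; lra.
have L0 : 0 < L by apply: ln_gt0; rewrite ltr1n.
have [hS|hS] := leP S (9 * L).
  exists 3^-1; split; first lra.
  move=> X F istar advx advb _ hF hb.
  have he : 0 < (3^-1 : R) <= 3^-1 by apply/andP; split; lra.
  apply: le_trans (main_bound istar advx hF hN hb he) _.
  rewrite invrK -/L -/S.
  lra.
have Sp : 0 < S by lra.
set e := Num.sqrt (L / S).
have LS : 0 < L / S by apply: divr_gt0.
have ep : 0 < e by rewrite /e sqrtr_gt0.
have e2 : e ^+ 2 = L / S by rewrite /e sqr_sqrtr // ltW.
have e3 : e < 3^-1.
  have : L / S < 9^-1.
    by rewrite ltr_pdivrMr //; lra.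
  rewrite -e2 => H.
  have [//|H2] := ltP e 3^-1.
  have : 3^-1 * 3^-1 <= e * e by apply: ler_pM; lra.
  rewrite expr2 in H; lra.
exists e; split; first lra.
move=> X F istar advx advb _ hF hb.
have he : 0 < e <= 3^-1 by apply/andP; split; lra.
apply: le_trans (main_bound istar advx hF hN hb he) _.
rewrite -/L -/S.
have EL : L = e ^+ 2 * S by rewrite e2 divfK // gt_eqF.
have E1 : e^-1 * L = e * S by rewrite EL; field; rewrite gt_eqF.
have E2 : Num.sqrt (S * L) = S * e.
  by rewrite EL (_ : S * (e ^+ 2 * S) = (S * e) ^+ 2) ?sqrtr_sqr ?ger0_norm //;
    [apply: mulr_ge0; lra | ring].
rewrite E1 E2.
have : 0 <= S * e by apply: mulr_ge0; lra.
lra.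
Qed.
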